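(* Let $\tau>\frac{3+\sqrt{17}}{2}$, $\gamma>0$, $\alpha\in D_{\gamma,\tau}$ with convergents $p_n/q_n$. Suppose that $\alpha-\frac{p_n}{q_n}>\frac{\gamma}{q_n^{\tau+1}}$ for every even $n$, and that for infinitely many even $m$ one has, for all even $n<m$, $$\frac{p_n}{q_n}+\frac{\gamma}{q_n^{\tau+1}}<\frac{p_m}{q_m}-\frac{\gamma}{q_m^{\tau+1}}-\frac{2\gamma}{q_m^{\tau-1}}.$$ Then $\alpha$ is an accumulation point of $D_{\gamma,\tau}$.
   Context: For $x\in\mathbb{R}$, $\|x\|:=\min_{p\in\mathbb{Z}}|x-p|$; $\mathbb{N}=\{1,2,\dots\}$. For $\gamma>0,\tau\ge1$, $D_{\gamma,\tau}:=\{\alpha\in(0,1): \|q\alpha\|\ge\gamma/q^\tau\ \forall q\in\mathbb{N}\}$; its elements are irrational. For irrational $\alpha\in(0,1)$ write $\alpha=\cfrac{1}{a_1+\cfrac{1}{a_2+\cdots}}$, and let $p_n/q_n$ ($n\ge0$) be its convergents: $p_{-1}=1,q_{-1}=0,p_0=0,q_0=1$, $p_n=a_np_{n-1}+p_{n-2}$, $q_n=a_nq_{n-1}+q_{n-2}$. Even-indexed convergents lie below $\alpha$. *)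

(* Defs.v *)
From Stdlib Require Import Reals Lra Lia ZArith Arith.
Open Scope R_scope.

Definition dist_Z (x : R) : R :=
  Rmin (x - IZR (Int_part x)) (IZR (Int_part x) + 1 - x).

Definition D (gamma tau : R) : R -> Prop := fun alpha =>
  0 < alpha < 1 /\
  forall q : nat, (1 <= q)%nat ->
    dist_Z (INR q * alpha) >= gamma / Rpower (INR q) tau.

Definition irrational (x : R) : Prop :=
  forall (p : Z) (q : nat), (1 <= q)%nat -> x <> IZR p / INR q.

Fixpoint cf_rest (a : R) (n : nat) : R :=
  match n with
  | O => a
  | S k => / cf_rest a k - IZR (Int_part (/ cf_rest a k))
  end.

(* partial quotient a_n (n >= 1): a_{n+1} = floor(1 / cf_rest a n) *)
Definition cf_a (a : R) (n : nat) : nat :=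
  match n with
  | O => O
  | S k => Z.to_nat (Int_part (/ cf_rest a k))
  end.

(* cf_pq a n = (p_{n-1}, q_{n-1}, p_n, q_n) *)
Fixpoint cf_pq (a : R) (n : nat) : nat * nat * nat * nat :=
  match n with
  | O => (1%nat, 0%nat, 0%nat, 1%nat)
  | S k =>
      let '(pm, qm, p, q) := cf_pq a k in
      (p, q, (cf_a a (S k) * p + pm)%nat, (cf_a a (S k) * q + qm)%nat)
  end.

Definition cf_p (a : R) (n : nat) : nat := let '(_, _, p, _) := cf_pq a n in p.
Definition cf_q (a : R) (n : nat) : nat := let '(_, _, _, q) := cf_pq a n in q.

Definition accumulation_point (S : R -> Prop) (x : R) : Prop :=
  forall eps : R, 0 < eps -> exists y, S y /\ y <> x /\ Rabs (y - x) < eps.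

(* Main.v *)
Require Import Defs.
From Stdlib Require Import Reals Lra Lia ZArith Arith List Classical ClassicalEpsilon.
Open Scope R_scope.

Definition lenl (l : list (R*R)) : R := fold_right (fun I s => snd I - fst I + s) 0 l.

Lemma lenl_app l1 l2 : lenl (l1 ++ l2) = lenl l1 + lenl l2.
Proof. induction l1 as [|I l1 IH]; simpl; [lra|rewrite IH; lra]. Qed.

Lemma lenl_nonneg l : (forall I, In I l -> fst I <= snd I) -> 0 <= lenl l.
Proof.
  induction l as [|I l IH]; simpl; intros H; [lra|].
  assert (fst I <= snd I) by (apply H; auto).
  assert (0 <= lenl l) by (apply IH; intros; apply H; auto). lra.
Qed.

Lemma cover_len_n : forall n l a b, (length l <= n)%nat -> a <= b ->
  (forall x, a <= x <= b -> exists I, In I l /\ fst I < x < snd I) ->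
  (forall I, In I l -> fst I <= snd I) -> b - a < lenl l.
Proof.
  induction n as [|n IH]; intros l a b Hlen Hab Hc Hn.
  - destruct l; [|simpl in Hlen; lia].
    destruct (Hc a) as [I [[] _]]; lra.
  - destruct (Hc a) as [I [HI Ha]]; [lra|].
    destruct (in_split _ _ HI) as [l1 [l2 E]]. subst l.
    assert (E2 : lenl (l1 ++ I :: l2) = lenl (l1 ++ l2) + (snd I - fst I)).
    { rewrite !lenl_app. simpl. lra. }
    rewrite E2.
    assert (Hn' : forall J, In J (l1 ++ l2) -> fst J <= snd J).
    { intros J HJ; apply Hn. apply in_app_or in HJ; apply in_or_app; simpl; tauto. }
    destruct (Rlt_le_dec b (snd I)) as [Hb|Hb].
    + pose proof (lenl_nonneg _ Hn'). lra.
    + assert (b - snd I < lenl (l1 ++ l2)).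
      { apply IH; [rewrite length_app in *; simpl in Hlen; lia|lra| |exact Hn'].
        intros x Hx. destruct (Hc x) as [J [HJ Hx2]]; [lra|].
        exists J; split; [|exact Hx2].
        apply in_app_or in HJ; apply in_or_app. destruct HJ as [HJ|HJ]; [auto|].
        destruct HJ as [HJ|HJ]; [subst J; lra|auto]. }
      lra.
Qed.

Lemma cover_len : forall l a b, a <= b ->
  (forall x, a <= x <= b -> exists I, In I l /\ fst I < x < snd I) ->
  (forall I, In I l -> fst I <= snd I) -> b - a < lenl l.
Proof. intros; eapply cover_len_n; eauto. Qed.

Lemma bw_point (L R0 : R) (bad : nat -> R -> Prop) :
  L <= R0 ->
  (forall q x, bad q x -> exists d, 0 < d /\ forall z, Rabs (z - x) < d -> bad q z) ->
  (forall K : nat, exists x, L <= x <= R0 /\ forall q, (q <= K)%nat -> ~ bad q x) ->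
  exists y, L <= y <= R0 /\ forall q, ~ bad q y.
Proof.
  intros HLR Hopen HK.
  assert (Hc : forall K:nat, {x | L <= x <= R0 /\ forall q, (q <= K)%nat -> ~ bad q x}).
  { intros K. apply ClassicalEpsilon.constructive_indefinite_description. apply HK. }
  set (u := fun K => proj1_sig (Hc K)).
  assert (Hu : forall K, L <= u K <= R0 /\ forall q, (q <= K)%nat -> ~ bad q (u K)).
  { intros K; unfold u; destruct (Hc K); simpl; auto. }
  destruct (Bolzano_Weierstrass u (fun c => L <= c <= R0) (compact_P3 L R0)) as [y Hy].
  { intros n; apply Hu. }
  assert (HyL : L <= y).
  { destruct (Rle_lt_dec L y) as [h|h]; [exact h|].
    destruct (Hy (disc y (mkposreal (L - y) ltac:(lra))) O) as [p [_ Hp]].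
    { exists (mkposreal (L - y) ltac:(lra)); intros z Hz; exact Hz. }
    unfold disc in Hp; simpl in Hp. destruct (Hu p) as [[h1 _] _].
    apply Rabs_def2 in Hp. lra. }
  assert (HyR : y <= R0).
  { destruct (Rle_lt_dec y R0) as [h|h]; [exact h|].
    destruct (Hy (disc y (mkposreal (y - R0) ltac:(lra))) O) as [p [_ Hp]].
    { exists (mkposreal (y - R0) ltac:(lra)); intros z Hz; exact Hz. }
    unfold disc in Hp; simpl in Hp. destruct (Hu p) as [[_ h1] _].
    apply Rabs_def2 in Hp. lra. }
  exists y; split; [lra|]. intros q Hb.
  destruct (Hopen q y Hb) as [d [Hd Hz]].
  destruct (Hy (bad q) q) as [p [Hp Hbp]].
  { exists (mkposreal d Hd). intros z Hz'. apply Hz. exact Hz'. }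
  destruct (Hu p) as [_ H]. exact (H q Hp Hbp).
Qed.

Lemma fold_snoc (g : nat -> R) l a : fold_right (fun q s => g q + s) 0 (l ++ a :: nil) = fold_right (fun q s => g q + s) 0 l + g a.
Proof. induction l as [|b l IH]; simpl; [ring|rewrite IH; ring]. Qed.

Lemma sum_tail (Q : R) (g : nat -> R) (B : R) : 0 < Q -> 0 <= B ->
  (forall q, (1 <= q)%nat -> g q <= (if Rle_dec (INR q) Q then 0 else B / (INR q)^2)) ->
  forall K, fold_right (fun q s => g q + s) 0 (seq 1 K) <= B * (2/Q - 2 / Rmax (INR K + 1) Q).
Proof.
  intros HQ HB Hg K. induction K as [|K IH].
  - simpl. assert (2 / Rmax (0 + 1) Q <= 2 / Q).
    { unfold Rdiv; apply Rmult_le_compat_l; [lra|]. apply Rinv_le_contravar; [lra|apply Rmax_r]. }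
    apply Rmult_le_pos; lra.
  - rewrite seq_S, fold_snoc. replace (1 + K)%nat with (S K) by lia.
    pose proof (Hg (S K) ltac:(lia)) as H1. rewrite S_INR in *.
    destruct (Rle_dec (INR K + 1) Q) as [h|h].
    + assert (2 / Rmax (INR K + 1 + 1) Q <= 2 / Rmax (INR K + 1) Q).
      { unfold Rdiv; apply Rmult_le_compat_l; [lra|]. apply Rinv_le_contravar.
        - apply Rlt_le_trans with Q; [lra|apply Rmax_r].
        - apply Rle_max_compat_r; lra. }
      assert (0 <= B * (2 / Rmax (INR K + 1) Q - 2 / Rmax (INR K + 1 + 1) Q)) by (apply Rmult_le_pos; [lra|lra]).
      lra.
    + pose proof (pos_INR K).
      rewrite Rmax_left in IH by lra. rewrite Rmax_left by lra.
      assert (B / (INR K + 1) ^ 2 <= B * (2/(INR K + 1) - 2/(INR K + 1 + 1))).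
      { replace (2/(INR K + 1) - 2/(INR K + 1 + 1)) with (2/((INR K + 1) * (INR K + 2))) by (field; lra).
        unfold Rdiv; apply Rmult_le_compat_l; [lra|]. simpl. rewrite Rmult_1_r.
        apply Rmult_le_reg_r with ((INR K+1)*(INR K+1)*((INR K + 1) * (INR K + 2))).
        { apply Rmult_lt_0_compat; nra. }
        field_simplify; try nra. }
      lra.
Qed.

Definition pp (a : R) (n : nat) : nat := let '(x, _, _, _) := cf_pq a n in x.
Definition qp (a : R) (n : nat) : nat := let '(_, x, _, _) := cf_pq a n in x.

Lemma cf_S (a : R) k :
  cf_p a (S k) = (cf_a a (S k) * cf_p a k + pp a k)%nat /\
  cf_q a (S k) = (cf_a a (S k) * cf_q a k + qp a k)%nat /\
  pp a (S k) = cf_p a k /\ qp a (S k) = cf_q a k.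
Proof.
  unfold cf_p, cf_q, pp, qp. simpl. destruct (cf_pq a k) as [[[x y] z] w]. auto.
Qed.

Lemma cf_0 a : cf_p a 0 = 0%nat /\ cf_q a 0 = 1%nat /\ pp a 0 = 1%nat /\ qp a 0 = 0%nat.
Proof. repeat split. Qed.

Lemma det_all a n :
  INR (pp a n) * INR (cf_q a n) - INR (cf_p a n) * INR (qp a n) = (-1)^n.
Proof.
  induction n as [|n IH].
  - simpl. lra.
  - destruct (cf_S a n) as [h1 [h2 [h3 h4]]]. rewrite h1, h2, h3, h4.
    rewrite !plus_INR, !mult_INR. simpl. rewrite <- IH. ring.
Qed.

Lemma det_even a k :
  INR (pp a (2*k)) * INR (cf_q a (2*k)) - INR (cf_p a (2*k)) * INR (qp a (2*k)) = 1.
Proof. rewrite det_all, pow_1_even. reflexivity. Qed.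

Lemma det_odd a k :
  INR (pp a (S (2*k))) * INR (cf_q a (S (2*k))) - INR (cf_p a (S (2*k))) * INR (qp a (S (2*k))) = -1.
Proof. rewrite det_all, pow_1_odd. reflexivity. Qed.

Lemma a_INR a n : 0 < cf_rest a n < 1 ->
  INR (cf_a a (S n)) = IZR (Int_part (/ cf_rest a n)) /\ 1 <= INR (cf_a a (S n)).
Proof.
  intros [h0 h1]. simpl.
  assert (Hi : 1 < / cf_rest a n).
  { rewrite <- Rinv_1. apply Rinv_lt_contravar; lra. }
  destruct (base_Int_part (/ cf_rest a n)) as [b1 b2].
  assert (Hz : (0 < Int_part (/ cf_rest a n))%Z) by (apply lt_IZR; lra).
  rewrite INR_IZR_INZ, Z2Nat.id by lia. split; [reflexivity|].
  apply IZR_le. lia.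
Qed.

Section CF.
Variable alpha : R.
Hypothesis Ha : 0 < alpha < 1.
Hypothesis Hirr : forall (p q : nat), (1 <= q)%nat -> alpha <> INR p / INR q.

Lemma cf_main n :
  0 < cf_rest alpha n < 1 /\ (1 <= cf_q alpha n)%nat /\
  alpha = (INR (cf_p alpha n) + INR (pp alpha n) * cf_rest alpha n) /
          (INR (cf_q alpha n) + INR (qp alpha n) * cf_rest alpha n).
Proof.
  induction n as [|n [Hr [Hq He]]].
  - unfold cf_q, cf_p, pp, qp; simpl. split; [exact Ha|]. split; [lia|]. field.
  - destruct (a_INR alpha n Hr) as [Ha1 Ha2].
    destruct (cf_S alpha n) as [h1 [h2 [h3 h4]]].
    set (r := cf_rest alpha n) in *.
    assert (Er : cf_rest alpha (S n) = / r - INR (cf_a alpha (S n))).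
    { rewrite Ha1. reflexivity. }
    destruct (base_Int_part (/ r)) as [b1 b2].
    assert (Hq1 : (1 <= cf_q alpha (S n))%nat).
    { rewrite h2. assert (1 <= cf_a alpha (S n))%nat by (apply INR_le; change (INR 1) with 1; lra). nia. }
    set (r' := cf_rest alpha (S n)) in *.
    assert (r'0 : 0 <= r' < 1) by (rewrite Er, Ha1; lra).
    assert (HE : alpha = (INR (cf_p alpha (S n)) + INR (pp alpha (S n)) * r') /
          (INR (cf_q alpha (S n)) + INR (qp alpha (S n)) * r')).
    { rewrite He at 1. rewrite h1, h2, h3, h4, !plus_INR, !mult_INR.
      pose proof (pos_INR (qp alpha n)). pose proof (pos_INR (pp alpha n)).
      assert (1 <= INR (cf_q alpha n)) by (apply (le_INR 1); exact Hq).
      assert (Hrr : r = / (INR (cf_a alpha (S n)) + r')) by (rewrite Er; field; lra).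
      rewrite Hrr. field. split; [|lra].
      pose proof (pos_INR (cf_q alpha n)). nra. }
    split; [|split; [exact Hq1|exact HE]].
    split; [|lra].
    destruct (Rle_lt_dec r' 0) as [h|h]; [|exact h].
    exfalso. apply (Hirr (cf_p alpha (S n)) (cf_q alpha (S n)) Hq1).
    rewrite HE at 1. replace r' with 0 by lra. field.
    apply not_0_INR. lia.
Qed.


Notation P n := (INR (cf_p alpha n)).
Notation Qn n := (INR (cf_q alpha n)).

Lemma a_ge1 n : (1 <= cf_a alpha (S n))%nat.
Proof.
  destruct (cf_main n) as [Hr _]. destruct (a_INR alpha n Hr) as [_ h].
  apply INR_le. change (INR 1) with 1. lra.
Qed.

Lemma q_ge1 n : (1 <= cf_q alpha n)%nat.
Proof. apply cf_main. Qed.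

Lemma qS n : (cf_q alpha n + qp alpha n <= cf_q alpha (S n))%nat.
Proof. destruct (cf_S alpha n) as [_ [h _]]. rewrite h. pose proof (a_ge1 n). nia. Qed.

Lemma qp_pos n : (1 <= n)%nat -> (1 <= qp alpha n)%nat.
Proof. intros h. destruct n; [lia|]. destruct (cf_S alpha n) as [_ [_ [_ h4]]]. rewrite h4. apply q_ge1. Qed.

Lemma q_ge_n n : (n <= cf_q alpha n)%nat.
Proof.
  induction n as [|n IH]; [lia|]. pose proof (qS n). pose proof (q_ge1 (S n)).
  destruct n; [lia|]. pose proof (qp_pos (S n) ltac:(lia)). lia.
Qed.

Lemma q_mono n m : (n <= m)%nat -> (cf_q alpha n <= cf_q alpha m)%nat.
Proof. induction 1; [lia|]. pose proof (qS m). lia. Qed.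

Lemma err_formula n : alpha - P n / Qn n =
  (-1)^n * cf_rest alpha n / (Qn n * (Qn n + INR (qp alpha n) * cf_rest alpha n)).
Proof.
  destruct (cf_main n) as [Hr [Hq He]].
  pose proof (det_all alpha n) as D.
  assert (1 <= Qn n) by (apply (le_INR 1); exact Hq).
  pose proof (pos_INR (qp alpha n)).
  rewrite He at 1. rewrite <- D. field. split; nra.
Qed.

Lemma err_even k : 0 < alpha - P (2*k) / Qn (2*k) < 1 / (Qn (2*k))^2.
Proof.
  rewrite err_formula, pow_1_even. destruct (cf_main (2*k)) as [Hr [Hq _]].
  assert (1 <= Qn (2*k)) by (apply (le_INR 1); exact Hq).
  pose proof (pos_INR (qp alpha (2*k))).
  set (r := cf_rest alpha (2*k)) in *. set (q := Qn (2*k)) in *. set (s := INR (qp alpha (2*k))) in *.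
  assert (0 <= s * r) by (apply Rmult_le_pos; lra).
  split.
  - apply Rmult_lt_0_compat; [lra|]. apply Rinv_0_lt_compat. nra.
  - assert (X : 0 < q * (q + s * r)) by nra.
    apply (Rmult_lt_reg_r (q * (q + s * r))); [exact X|].
    replace (1 * r / (q * (q + s * r)) * (q * (q + s * r))) with r by (field; lra).
    replace (1 / q ^ 2 * (q * (q + s * r))) with (1 + s * r / q) by (field; lra).
    assert (0 <= s * r / q) by (apply Rmult_le_pos; [lra|left; apply Rinv_0_lt_compat; lra]).
    lra.
Qed.

Lemma err_odd k : alpha < P (S (2*k)) / Qn (S (2*k)).
Proof.
  pose proof (err_formula (S (2*k))) as E. rewrite pow_1_odd in E.
  destruct (cf_main (S (2*k))) as [Hr [Hq _]].
  assert (1 <= Qn (S (2*k))) by (apply (le_INR 1); exact Hq).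
  pose proof (pos_INR (qp alpha (S (2*k)))).
  set (r := cf_rest alpha (S (2*k))) in *. set (q := Qn (S (2*k))) in *. set (s := INR (qp alpha (S (2*k)))) in *.
  assert (0 <= s * r) by (apply Rmult_le_pos; lra).
  assert (X : 0 < q * (q + s * r)) by nra.
  assert (0 < r / (q * (q + s * r))).
  { apply Rmult_lt_0_compat; [lra|]. apply Rinv_0_lt_compat. exact X. }
  replace (-1 * r / (q * (q + s * r))) with (- (r / (q * (q + s * r)))) in E by (field; lra).
  lra.
Qed.

Lemma even_step k : P (2*k) / Qn (2*k) <= P (2*(S k)) / Qn (2*(S k)).
Proof.
  replace (2 * S k)%nat with (S (S (2*k))) by lia.
  destruct (cf_S alpha (S (2*k))) as [h1 [h2 [h3 h4]]].
  destruct (cf_S alpha (2*k)) as [_ [_ [g3 g4]]].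
  pose proof (det_odd alpha k) as D. rewrite g3, g4 in D.
  rewrite h1, h2, g3, g4, !plus_INR, !mult_INR.
  pose proof (q_ge1 (2*k)) as Hq0. pose proof (q_ge1 (S (2*k))) as Hq1.
  apply (le_INR 1) in Hq0. apply (le_INR 1) in Hq1. change (INR 1) with 1 in Hq0, Hq1.
  pose proof (a_ge1 (S (2*k))) as Ha1. apply (le_INR 1) in Ha1. change (INR 1) with 1 in Ha1.
  set (a := INR (cf_a alpha (S (S (2 * k))))) in *.
  set (p0 := P (2*k)) in *. set (q0 := Qn (2*k)) in *.
  set (p1 := P (S (2*k))) in *. set (q1 := Qn (S (2*k))) in *.
  assert (0 < q0) by lra. assert (0 < a * q1 + q0) by nra.
  assert (E : (a * p1 + p0) / (a * q1 + q0) - p0 / q0 = a / (q0 * (a * q1 + q0))).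
  {     transitivity (a * (p1 * q0 - p0 * q1) / (q0 * (a * q1 + q0))); [field; lra|].
    replace (p1 * q0 - p0 * q1) with 1 by lra. rewrite Rmult_1_r; reflexivity. }
  assert (0 <= a / (q0 * (a * q1 + q0))).
  { apply Rmult_le_pos; [lra|]. left. apply Rinv_0_lt_compat. apply Rmult_lt_0_compat; lra. }
  lra.
Qed.

Lemma even_mono k j : (k <= j)%nat -> P (2*k) / Qn (2*k) <= P (2*j) / Qn (2*j).
Proof. induction 1; [lra|]. pose proof (even_step m). lra. Qed.

End CF.

Lemma gap_lemma (a c : Z) (b d : nat) : (1 <= b)%nat -> (1 <= d)%nat ->
  IZR a / INR b < IZR c / INR d -> 1 / (INR b * INR d) <= IZR c / INR d - IZR a / INR b.
Proof.
  intros hb hd H.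
  assert (B : 1 <= INR b) by (apply (le_INR 1); exact hb).
  assert (Dd : 1 <= INR d) by (apply (le_INR 1); exact hd).
  assert (H2 : IZR a * INR d < IZR c * INR b).
  { apply Rmult_lt_compat_r with (r := INR b * INR d) in H; [|nra].
    replace (IZR a / INR b * (INR b * INR d)) with (IZR a * INR d) in H by (field; lra).
    replace (IZR c / INR d * (INR b * INR d)) with (IZR c * INR b) in H by (field; lra). exact H. }
  rewrite !INR_IZR_INZ in *. rewrite <- !mult_IZR in H2. apply lt_IZR in H2.
  assert (H3 : 1 <= IZR (c * Z.of_nat b) - IZR (a * Z.of_nat d)).
  { rewrite <- minus_IZR. apply IZR_le. lia. }
  rewrite !mult_IZR in H3.
  replace (IZR c / IZR (Z.of_nat d) - IZR a / IZR (Z.of_nat b)) with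
    ((IZR c * IZR (Z.of_nat b) - IZR a * IZR (Z.of_nat d)) / (IZR (Z.of_nat b) * IZR (Z.of_nat d))) by (field; lra).
  unfold Rdiv. apply Rmult_le_compat_r; [|lra]. left. apply Rinv_0_lt_compat. nra.
Qed.

Lemma Rpower_pos x e : 0 < Rpower x e.
Proof. unfold Rpower. apply exp_pos. Qed.

Lemma Rpower_base1 e : Rpower 1 e = 1.
Proof. unfold Rpower. rewrite ln_1, Rmult_0_r. apply exp_0. Qed.

Lemma exp_le' a b : a <= b -> exp a <= exp b.
Proof. intros [h|h]; [left; apply exp_increasing; exact h|subst; lra]. Qed.

Lemma ln_le' a b : 0 < a -> a <= b -> ln a <= ln b.
Proof. intros h [h2|h2]; [left; apply ln_increasing; lra|subst; lra]. Qed.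

Lemma Rpower_base_le x y e : 0 < x -> x <= y -> 0 <= e -> Rpower x e <= Rpower y e.
Proof.
  intros hx hxy he. unfold Rpower. apply exp_le'. apply Rmult_le_compat_l; [exact he|].
  apply ln_le'; lra.
Qed.

Lemma Rpower_ge_pow x n e : 1 <= x -> INR n <= e -> x ^ n <= Rpower x e.
Proof.
  intros hx he. rewrite <- Rpower_pow by lra. apply Rle_Rpower; lra.
Qed.

Lemma Rpower_plus1 x e : 0 < x -> Rpower x (e + 1) = x * Rpower x e.
Proof. intros hx. rewrite Rpower_plus, Rpower_1 by exact hx. ring. Qed.

Lemma Rpower_plus2 x e : 0 < x -> Rpower x (e + 1) = x ^ 2 * Rpower x (e - 1).
Proof.
  intros hx. replace (e + 1) with ((e - 1) + INR 2) by (simpl; ring).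
  rewrite Rpower_plus, Rpower_pow by exact hx. ring.
Qed.

Lemma between_lemma q Q1 Q2 s t x0 :
  1 <= Q1 -> 1 <= Q2 -> Q1 + 1 <= q ->
  1 / (q * Q2) <= s - x0 -> 1 / (q * Q1) <= t - x0 -> t - s = 1 / (Q1 * Q2) ->
  1 / (2 * q^2) < s - x0 /\ (2 * q <= Q2 -> 1 / (2 * q * Q1) <= s - x0).
Proof.
  intros h1 h2 h3 g1 g2 e.
  assert (H2 : 2 * q <= Q2 -> 1 / (2 * q * Q1) <= s - x0).
  { intros hq.
    assert (1 / (Q1 * Q2) <= 1 / (2 * q * Q1)).
    { unfold Rdiv; rewrite !Rmult_1_l. apply Rinv_le_contravar.
      - apply Rmult_lt_0_compat; lra.
      - assert (0 <= Q1*(Q2-2*q)) by (apply Rmult_le_pos; lra). nra. }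
    assert (1 / (2 * q * Q1) = 1/(q*Q1) - 1/(2*q*Q1)) by (field; nra).
    lra. }
  split; [|exact H2].
  destruct (Rle_lt_dec (2*q) Q2) as [hq|hq].
  - specialize (H2 hq). assert (1 / (2 * q^2) < 1 / (2 * q * Q1)).
    { unfold Rdiv; rewrite !Rmult_1_l. apply Rinv_lt_contravar.
      - assert (0 < 2*q*Q1) by (apply Rmult_lt_0_compat; lra). apply Rmult_lt_0_compat; nra.
      - assert (0 < q*(q - Q1)) by (apply Rmult_lt_0_compat; lra). nra. }
    lra.
  - assert (1 / (2 * q^2) < 1 / (q * Q2)).
    { unfold Rdiv; rewrite !Rmult_1_l. apply Rinv_lt_contravar.
      - assert (0 < q*Q2) by (apply Rmult_lt_0_compat; lra). apply Rmult_lt_0_compat; nra.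
      - assert (0 < q*(2*q - Q2)) by (apply Rmult_lt_0_compat; lra). nra. }
    lra.
Qed.

Lemma frac_le a b c d : 0 < b -> 0 < d -> a * d <= c * b -> a / b <= c / d.
Proof.
  intros hb hd h. apply Rmult_le_reg_r with (b * d); [nra|].
  replace (a / b * (b * d)) with (a * d) by (field; lra).
  replace (c / d * (b * d)) with (c * b) by (field; lra). exact h.
Qed.

Lemma final_case1 q qm A g rq rm D :
  2 <= q -> 0 < g <= 1/2 -> 2 * q <= qm -> qm^2 <= A ->
  rq <= g / q^4 -> rm = g / (qm^2 * A) -> 1 / (2 * q^2) < D ->
  rq + rm + 2 * g / A <= D.
Proof.
  intros hq hg hqm hA hrq hrm hD.
  assert (q2 : 4 <= q^2) by nra.
  assert (qm2 : 4 * q^2 <= qm^2) by nra.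
  assert (b1 : g / q^4 <= 1 / (8 * q^2)).
  { apply frac_le; [nra|nra|]. replace (q^4) with (q^2*q^2) by ring. nra. }
  assert (b2 : g / (qm^2 * A) <= 1 / (8 * q^2)).
  { apply frac_le; [nra|nra|]. nra. }
  assert (b3 : 2 * g / A <= 1 / (4 * q^2)).
  { apply frac_le; [nra|nra|]. nra. }
  assert (1 / (8 * q^2) + 1 / (8 * q^2) + 1 / (4 * q^2) = 1 / (2 * q^2)) by (field; nra).
  lra.
Qed.

Lemma final_case2 q qm A g rq rm D :
  2 <= q -> 0 < g <= 1/2 -> qm < 2 * q -> 4 <= qm -> qm^2 <= A -> 2 * q * qm <= A ->
  rq <= g / q^4 -> rm = g / (qm^2 * A) -> 1 / (q * qm) <= D ->
  rq + rm + 2 * g / A <= D.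
Proof.
  intros hq hg hqm hqm4 hA hA2 hrq hrm hD.
  assert (c1 : 2 * qm <= q^3).
  { assert (qm^3 < 8 * q^3).
    { assert (0 < qm) by lra. assert (qm^2 < 4*q^2) by nra. nra. }
    nra. }
  assert (b1 : g / q^4 <= 1 / (4 * (q * qm))).
  { apply frac_le; [nra|nra|]. replace (q^4) with (q*q^3) by ring.
    assert (0 < q * qm) by nra.
    assert (g * (4 * (q * qm)) <= 2 * (q * qm)) by nra.
    assert (2 * (q*qm) <= q * q^3) by (replace (2*(q*qm)) with (q*(2*qm)) by ring; apply Rmult_le_compat_l; lra).
    lra. }
  assert (b2 : g / (qm^2 * A) + 2 * g / A <= 3 / (2 * A)).
  { assert (0 < A) by nra.
    assert (g / (qm^2 * A) <= 1 / (2*A)).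
    { assert (0 < qm^2) by nra. apply frac_le; [apply Rmult_lt_0_compat; lra|lra|]. assert (1 <= qm^2) by nra.
      assert (g * (2*A) <= A) by nra. assert (A <= qm^2 * A) by nra. lra. }
    assert (2 * g / A <= 1 / A) by (apply frac_le; nra).
    assert (1/(2*A) + 1/A = 3/(2*A)) by (field; lra). lra. }
  assert (b3 : 3 / (2 * A) <= 3 / (4 * (q * qm))).
  { apply frac_le; nra. }
  assert (1 / (4 * (q * qm)) + 3 / (4 * (q * qm)) = 1 / (q * qm)) by (field; nra).
  lra.
Qed.

Lemma per_q_bound q Q l g rq cnt :
  0 < Q < q -> 0 < g -> 0 <= l -> 0 <= rq <= g / q^4 -> 0 <= cnt <= q * l + 3 ->
  cnt * (rq + rq) <= 2 * g * (l / Q + 3 / Q^2) / q^2.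
Proof.
  intros hQ hg hl hrq hc.
  assert (h1 : cnt * (rq + rq) <= (q * l + 3) * (2 * (g / q^4))).
  { replace (rq + rq) with (2 * rq) by ring. apply Rmult_le_compat; lra. }
  assert (e : (q * l + 3) * (2 * (g / q^4)) = 2 * g * (l / q^3 + 3 / q^4)) by (field; lra).
  assert (b1 : l / q^3 <= l / (Q * q^2)).
  { assert (0 < q^2) by nra. assert (0 < Q * q^2) by (apply Rmult_lt_0_compat; lra).
    apply frac_le; [nra|lra|]. assert (Q * q^2 <= q^3) by (replace (q^3) with (q * q^2) by ring; apply Rmult_le_compat_r; lra).
    apply Rmult_le_compat_l; lra. }
  assert (b2 : 3 / q^4 <= 3 / (Q^2 * q^2)).
  { assert (0 < Q^2 * q^2) by (apply Rmult_lt_0_compat; nra).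
    assert (0 < q^2) by nra. assert (0 < q^4) by (replace (q^4) with (q^2*q^2) by ring; apply Rmult_lt_0_compat; lra).
    apply frac_le; [lra|lra|]. assert (Q^2 <= q^2) by nra.
    assert (Q^2 * q^2 <= q^2 * q^2) by (apply Rmult_le_compat_r; nra).
    replace (q^4) with (q^2*q^2) by ring. lra. }
  assert (e2 : 2 * g * (l / Q + 3 / Q^2) / q^2 = 2 * g * (l / (Q * q^2) + 3 / (Q^2 * q^2))) by (field; lra).
  rewrite e2. assert (0 < 2*g) by lra.
  assert (2 * g * (l / q ^ 3 + 3 / q ^ 4) <= 2 * g * (l / (Q * q ^ 2) + 3 / (Q ^ 2 * q ^ 2))).
  { apply Rmult_le_compat_l; lra. }
  lra.
Qed.

Lemma total_bound qm A g :
  10 <= qm -> qm^2 <= A -> qm^5 <= A^2 -> 0 < g <= 1/2 ->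
  2 * (2 * g * (2 * g / A / (A / (2 * qm)) + 3 / (A / (2 * qm))^2)) / (A / (2 * qm)) < 2 * g / A.
Proof.
  intros h1 h2 h3 hg.
  assert (hA : 0 < A) by nra.
  assert (EA : A = 2 * qm * (A / (2 * qm))) by (field; lra).
  generalize dependent (A / (2 * qm)). intros Q EA.
  assert (hQ : 0 < Q) by nra.
  assert (hQ2 : qm^3 <= 4 * Q^2).
  { assert (qm^2 * qm^3 <= qm^2 * (4 * Q^2)).
    { replace (qm^2 * qm^3) with (qm^5) by ring. replace (qm^2 * (4*Q^2)) with (A^2) by (rewrite EA; ring). exact h3. }
    apply Rmult_le_reg_l with (qm^2); [nra|exact H]. }
  assert (hq3 : 100 * qm <= qm^3) by nra.
  assert (E : 2 * (2 * g * (2 * g / A / Q + 3 / Q ^ 2)) / Q = (8 * g * g * Q + 12 * g * A) / (A * Q^3)) by (field; lra).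
  rewrite E. apply Rmult_lt_reg_r with (A * Q^3); [apply Rmult_lt_0_compat; [lra|apply pow_lt; lra]|].
  replace ((8 * g * g * Q + 12 * g * A) / (A * Q ^ 3) * (A * Q ^ 3)) with (8 * g * g * Q + 12 * g * A) by (field; split; lra).
  replace (2 * g / A * (A * Q ^ 3)) with (2 * g * Q^3) by (field; lra).
  rewrite EA.
  assert (8 * g * g * Q <= 4 * g * Q) by (assert (0 <= 4 * g * Q * (1 - 2 * g)) by (apply Rmult_le_pos; [nra|lra]); nra).
  assert (4 * Q + 24 * qm * Q < Q^3) by nra.
  nra.
Qed.

Lemma sum_recip a b q : 0 < a -> 0 < b -> 0 < q -> 1 / (q * a) + 1 / (q * b) <= 1 / (a * b) -> a + b <= q.
Proof.
  intros ha hb hq h.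
  apply Rmult_le_compat_r with (r := q * a * b) in h; [|left; apply Rmult_lt_0_compat; [apply Rmult_lt_0_compat|]; lra].
  replace ((1 / (q * a) + 1 / (q * b)) * (q * a * b)) with (b + a) in h by (field; lra).
  replace (1 / (a * b) * (q * a * b)) with q in h by (field; lra). lra.
Qed.

Lemma rho_small g q : 0 < g <= 1/2 -> 1 <= q -> g / q^4 <= 1 / (2 * q^2).
Proof.
  intros hg hq. assert (0 < q^2) by nra. apply frac_le; [apply pow_lt; lra|lra|].
  assert (q^2 <= q^4) by (replace (q^4) with (q^2*q^2) by ring; assert (1 <= q^2) by nra; nra).
  assert (g * (2 * q^2) <= q^2) by nra. lra.
Qed.

Lemma distZ_le x (p : Z) : dist_Z x <= Rabs (x - IZR p).
Proof.
  unfold dist_Z. destruct (base_Int_part x) as [b1 b2].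
  set (z := Int_part x) in *.
  destruct (Z_le_gt_dec p z) as [h|h].
  - apply IZR_le in h. apply Rle_trans with (x - IZR z); [apply Rmin_l|].
    rewrite Rabs_right; lra.
  - assert (h' : (z + 1 <= p)%Z) by lia. apply IZR_le in h'. rewrite plus_IZR in h'.
    apply Rle_trans with (IZR z + 1 - x); [apply Rmin_r|].
    rewrite Rabs_left1; lra.
Qed.

Lemma sqrt17 : 4 < sqrt 17.
Proof.
  destruct (Rlt_le_dec 4 (sqrt 17)) as [h|h]; [exact h|].
  pose proof (sqrt_sqrt 17 ltac:(lra)). pose proof (sqrt_pos 17). nra.
Qed.

Section Main.
Variables tau gamma alpha : R.
Hypothesis Htau : (3 + sqrt 17) / 2 < tau.
Hypothesis Hg : 0 < gamma.
Hypothesis HDa : D gamma tau alpha.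

Lemma tau_gt : 7/2 < tau.
Proof. pose proof sqrt17. lra. Qed.

Lemma alpha01 : 0 < alpha < 1.
Proof. apply HDa. Qed.

Lemma INR_ge1 q : (1 <= q)%nat -> 1 <= INR q.
Proof. intros h. apply (le_INR 1) in h. exact h. Qed.

Lemma D_approx (p : Z) (q : nat) : (1 <= q)%nat ->
  gamma / Rpower (INR q) (tau + 1) <= Rabs (alpha - IZR p / INR q).
Proof.
  intros hq. pose proof (INR_ge1 q hq) as hq'.
  destruct HDa as [_ H]. specialize (H q hq).
  pose proof (distZ_le (INR q * alpha) p) as H2.
  rewrite Rpower_plus1 by lra.
  pose proof (Rpower_pos (INR q) tau).
  replace (INR q * alpha - IZR p) with (INR q * (alpha - IZR p / INR q)) in H2 by (field; lra).
  rewrite Rabs_mult, Rabs_right in H2 by lra.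
  apply Rmult_le_reg_l with (INR q); [lra|].
  replace (INR q * (gamma / (INR q * Rpower (INR q) tau))) with (gamma / Rpower (INR q) tau) by (field; lra).
  lra.
Qed.

Lemma gamma_half : gamma <= 1/2.
Proof.
  destruct HDa as [ha H]. specialize (H 1%nat (le_n 1)).
  change (INR 1) with 1 in H. rewrite Rpower_base1, Rmult_1_l in H.
  pose proof (distZ_le alpha 0). pose proof (distZ_le alpha 1).
  rewrite Rabs_right in H0 by lra. rewrite Rabs_left1 in H1 by lra.
  unfold Rdiv in H. rewrite Rinv_1, Rmult_1_r in H. lra.
Qed.

Lemma irr : forall (p q : nat), (1 <= q)%nat -> alpha <> INR p / INR q.
Proof.
  intros p q hq E. pose proof (D_approx (Z.of_nat p) q hq) as H.
  rewrite <- INR_IZR_INZ, <- E in H. rewrite Rminus_diag, Rabs_R0 in H.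
  assert (0 < gamma / Rpower (INR q) (tau + 1)).
  { apply Rmult_lt_0_compat; [lra|apply Rinv_0_lt_compat, Rpower_pos]. }
  lra.
Qed.

Definition rho (q : nat) := gamma / Rpower (INR q) (tau + 1).

Lemma rho_pos q : 0 < rho q.
Proof. unfold rho. apply Rmult_lt_0_compat; [lra|apply Rinv_0_lt_compat, Rpower_pos]. Qed.

Lemma rho_le4 q : (1 <= q)%nat -> rho q <= gamma / (INR q)^4.
Proof.
  intros hq. pose proof (INR_ge1 q hq). unfold rho.
  assert (INR q ^ 4 <= Rpower (INR q) (tau + 1)).
  { apply Rpower_ge_pow; [lra|]. pose proof tau_gt. simpl. lra. }
  apply frac_le; [apply Rpower_pos|apply pow_lt; lra|]. nra.
Qed.

Lemma rho_mono q1 q2 : (1 <= q1 <= q2)%nat -> rho q2 <= rho q1.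
Proof.
  intros h. unfold rho. pose proof (INR_ge1 q1 ltac:(lia)).
  assert (INR q1 <= INR q2) by (apply le_INR; lia).
  assert (Rpower (INR q1) (tau + 1) <= Rpower (INR q2) (tau + 1)).
  { apply Rpower_base_le; [lra|lra|]. pose proof tau_gt. lra. }
  pose proof (Rpower_pos (INR q1) (tau+1)).
  apply frac_le; [apply Rpower_pos|apply Rpower_pos|]. nra.
Qed.


Notation P n := (INR (cf_p alpha n)).
Notation Qn n := (INR (cf_q alpha n)).

Lemma Ha01 : 0 < alpha < 1. Proof. exact alpha01. Qed.

Lemma Qn_ge1 n : 1 <= Qn n.
Proof. apply INR_ge1. apply (q_ge1 alpha Ha01 irr). Qed.

Lemma gap_up (p : Z) (q : nat) n : (1 <= q)%nat -> IZR p / INR q < P n / Qn n ->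
  1 / (INR q * Qn n) <= P n / Qn n - IZR p / INR q.
Proof.
  intros hq h. rewrite INR_IZR_INZ with (n := cf_p alpha n) in *.
  apply gap_lemma; auto. apply (q_ge1 alpha Ha01 irr).
Qed.

Lemma gap_down (p : Z) (q : nat) n : (1 <= q)%nat -> P n / Qn n < IZR p / INR q ->
  1 / (INR q * Qn n) <= IZR p / INR q - P n / Qn n.
Proof.
  intros hq h. rewrite INR_IZR_INZ with (n := cf_p alpha n) in *. rewrite Rmult_comm.
  apply gap_lemma; auto. apply (q_ge1 alpha Ha01 irr).
Qed.

Lemma det_t k : P (S (2*k)) / Qn (S (2*k)) - P (2*k) / Qn (2*k) = 1 / (Qn (2*k) * Qn (S (2*k))).
Proof.
  pose proof (det_odd alpha k) as D. destruct (cf_S alpha (2*k)) as [_ [_ [g3 g4]]].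
  rewrite g3, g4 in D. pose proof (Qn_ge1 (2*k)). pose proof (Qn_ge1 (S (2*k))).
  transitivity ((P (S (2*k)) * Qn (2*k) - P (2*k) * Qn (S (2*k))) / (Qn (2*k) * Qn (S (2*k)))); [field; lra|].
  replace (P (S (2*k)) * Qn (2*k) - P (2*k) * Qn (S (2*k))) with 1 by lra. reflexivity.
Qed.

Lemma det_s k : P (S (2*k)) / Qn (S (2*k)) - P (S (S (2*k))) / Qn (S (S (2*k))) = 1 / (Qn (S (2*k)) * Qn (S (S (2*k)))).
Proof.
  pose proof (det_even alpha (S k)) as D. replace (2 * S k)%nat with (S (S (2*k))) in D by lia.
  destruct (cf_S alpha (S (2*k))) as [_ [_ [g3 g4]]].
  rewrite g3, g4 in D. pose proof (Qn_ge1 (S (S (2*k)))). pose proof (Qn_ge1 (S (2*k))).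
  transitivity ((P (S (2*k)) * Qn (S (S (2*k))) - P (S (S (2*k))) * Qn (S (2*k))) / (Qn (S (2*k)) * Qn (S (S (2*k))))); [field; lra|].
  replace (P (S (2*k)) * Qn (S (S (2*k))) - P (S (S (2*k))) * Qn (S (2*k))) with 1 by lra. reflexivity.
Qed.

Lemma classify x : 0 < x < alpha -> exists k, P (2*k) / Qn (2*k) <= x < P (S (S (2*k))) / Qn (S (S (2*k))).
Proof.
  intros hx.
  assert (Hex : exists k, x < P (2*k) / Qn (2*k)).
  { destruct (INR_unbounded (1 / (alpha - x))) as [k hk].
    assert (1 / (alpha - x) > 0) by (apply Rlt_gt, Rdiv_lt_0_compat; lra).
    exists k. pose proof (err_even alpha Ha01 irr k) as [e1 e2].
    pose proof (q_ge_n alpha Ha01 irr (2*k)) as hq. apply le_INR in hq.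
    rewrite mult_INR in hq. change (INR 2) with 2 in hq.
    assert (hk2 : INR k <= Qn (2*k)) by (pose proof (pos_INR k); lra).
    assert (1 / Qn (2*k) ^ 2 <= 1 / INR k).
    { pose proof (Qn_ge1 (2*k)). apply frac_le; [apply pow_lt; lra|lra|]. assert (Qn (2*k) <= Qn (2*k) ^ 2) by nra. lra. }
    assert (1 / INR k < alpha - x).
    { apply Rmult_lt_reg_r with (INR k * / (alpha - x)).
      - apply Rmult_lt_0_compat; [lra|apply Rinv_0_lt_compat; lra].
      - replace (1 / INR k * (INR k * / (alpha - x))) with (1 / (alpha - x)) by (field; lra).
        replace ((alpha - x) * (INR k * / (alpha - x))) with (INR k) by (field; lra). lra. }
    lra. }
  destruct Hex as [k hk].
  induction k as [|k IH].
  - exfalso. unfold cf_p, cf_q in hk. simpl in hk. lra.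
  - destruct (Rlt_le_dec x (P (2*k) / Qn (2*k))) as [h|h].
    + apply IH, h.
    + exists k. split; [exact h|]. replace (S (S (2*k))) with (2 * S k)%nat by lia. exact hk.
Qed.



Variable j : nat.
Hypothesis Hj : (1 <= j)%nat.
Hypothesis Hqm : 10 <= Qn (2*j).
Hypothesis Hm : forall n, Nat.Even n -> (n < 2*j)%nat ->
  P n / Qn n + rho (cf_q alpha n) < P (2*j) / Qn (2*j) - rho (cf_q alpha (2*j)) - 2 * gamma / Rpower (Qn (2*j)) (tau - 1).

Definition qm := Qn (2*j).
Definition AA := Rpower qm (tau - 1).
Definition ell := 2 * gamma / AA.
Definition R0 := P (2*j) / qm - rho (cf_q alpha (2*j)).
Definition LL := R0 - ell.
Definition QQ := AA / (2 * qm).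

Lemma AA_ge : qm^2 <= AA.
Proof. unfold AA, qm. apply Rpower_ge_pow; [lra|]. pose proof tau_gt. simpl. lra. Qed.

Lemma AA_ge5 : qm^5 <= AA^2.
Proof.
  unfold AA, qm. replace (Rpower (Qn (2*j)) (tau - 1) ^ 2) with (Rpower (Qn (2*j)) ((tau - 1) + (tau - 1))).
  - apply Rpower_ge_pow; [lra|]. pose proof tau_gt. simpl. lra.
  - rewrite Rpower_plus. ring.
Qed.

Lemma rho_m : rho (cf_q alpha (2*j)) = gamma / (qm^2 * AA).
Proof. unfold rho, AA, qm. rewrite Rpower_plus2 by lra. reflexivity. Qed.

Lemma R0_lt : R0 < alpha.
Proof.
  unfold R0, qm. pose proof (err_even alpha Ha01 irr j). pose proof (rho_pos (cf_q alpha (2*j))). lra.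
Qed.

Lemma LL_gt : gamma < LL.
Proof.
  assert (E0 : Nat.Even 0) by (exists 0%nat; reflexivity).
  pose proof (Hm 0 E0 ltac:(lia)) as H.
  unfold LL, R0, ell, AA, qm.
  assert (e1 : cf_p alpha 0 = 0%nat) by reflexivity. assert (e2 : cf_q alpha 0 = 1%nat) by reflexivity.
  rewrite e1, e2 in H. unfold rho in H at 1. change (INR 1) with 1 in H. change (INR 0) with 0 in H.
  rewrite Rpower_base1 in H. lra.
Qed.

Lemma Nat_even2 k : Nat.Even (2*k). Proof. exists k. reflexivity. Qed.

Lemma small (p : Z) (q : nat) : (1 <= q)%nat -> INR q <= QQ ->
  IZR p / INR q + rho q <= LL \/ R0 <= IZR p / INR q - rho q.
Proof.
  intros hq hQ. set (x0 := IZR p / INR q).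
  pose proof (INR_ge1 q hq) as hq'.
  pose proof R0_lt as hR0. pose proof LL_gt as hLL. pose proof gamma_half as hgh.
  pose proof (rho_le4 q hq) as hr4.
  pose proof (rho_small gamma (INR q) ltac:(lra) hq') as hrs.
  pose proof (rho_pos q) as hrp.
  destruct (Rle_lt_dec alpha x0) as [ha|ha].
  { right. pose proof (D_approx p q hq) as H. fold (rho q) in H. fold x0 in H.
    rewrite Rabs_left1 in H by lra. lra. }
  destruct (Rle_lt_dec x0 0) as [h0|h0].
  { left. assert (rho q <= rho 1) by (apply rho_mono; lia).
    assert (rho 1 = gamma) by (unfold rho; change (INR 1) with 1; rewrite Rpower_base1; field).
    lra. }
  destruct (classify x0 ltac:(lra)) as [k [hk1 hk2]].
  pose proof (err_odd alpha Ha01 irr k) as Ht.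
  pose proof (det_t k) as Dt.
  pose proof (Qn_ge1 (2*k)) as Q0. pose proof (Qn_ge1 (S (2*k))) as Q1. pose proof (Qn_ge1 (S (S (2*k)))) as Q2.
  pose proof (gap_up p q (S (2*k)) hq ltac:(fold x0; lra)) as g2. fold x0 in g2.
  destruct (Rle_lt_dec x0 (P (2*k) / Qn (2*k))) as [he|hlt].
  -
    assert (Ex : x0 = P (2*k) / Qn (2*k)) by lra.
    assert (hqq : Qn (2*k) <= INR q).
    { rewrite Ex, Dt in g2. apply Rmult_le_reg_r with (/ (INR q * Qn (2*k) * Qn (S (2*k)))).
      { apply Rinv_0_lt_compat. apply Rmult_lt_0_compat; [apply Rmult_lt_0_compat|]; lra. }
      replace (Qn (2 * k) * / (INR q * Qn (2 * k) * Qn (S (2 * k)))) with (1 / (INR q * Qn (S (2*k)))) by (field; lra).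
      replace (INR q * / (INR q * Qn (2 * k) * Qn (S (2 * k)))) with (1 / (Qn (2*k) * Qn (S (2*k)))) by (field; lra).
      exact g2. }
    apply INR_le in hqq.
    assert (hrq : rho q <= rho (cf_q alpha (2*k))) by (apply rho_mono; split; [apply (q_ge1 alpha Ha01 irr)|exact hqq]).
    destruct (lt_dec k j) as [hkj|hkj].
    + left. pose proof (Hm (2*k) (Nat_even2 k) ltac:(lia)) as H.
      unfold LL, R0, ell, AA, qm. lra.
    + right. pose proof (even_mono alpha Ha01 irr j k ltac:(lia)) as hmono.
      pose proof (q_mono alpha Ha01 irr (2*j) (2*k) ltac:(lia)).
      assert (rho q <= rho (cf_q alpha (2*j))) by (apply rho_mono; split; [apply (q_ge1 alpha Ha01 irr)|lia]).
      unfold R0, qm. lra.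
  -
    pose proof (gap_down p q (2*k) hq hlt) as g1. fold x0 in g1.
    assert (hsum : Qn (2*k) + Qn (S (2*k)) <= INR q).
    { apply sum_recip; lra. }
    pose proof (gap_up p q (S (S (2*k))) hq hk2) as g3. fold x0 in g3.
    pose proof (det_s k) as Ds.
    destruct (between_lemma (INR q) (Qn (S (2*k))) (Qn (S (S (2*k)))) _ _ x0 Q1 Q2 ltac:(lra)
      g3 g2 Ds) as [B1 B2].
    destruct (lt_eq_lt_dec (S k) j) as [[hkj|hkj]|hkj].
    + left. pose proof (Hm (S (S (2*k))) ltac:(exists (S k); lia) ltac:(lia)) as H.
      pose proof (rho_pos (cf_q alpha (S (S (2*k))))).
      unfold LL, R0, ell, AA, qm. lra.
    + left.
      assert (Ej : (2*j)%nat = S (S (2*k))) by lia.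
      assert (Eqm : qm = Qn (S (S (2*k)))) by (unfold qm; rewrite Ej; reflexivity).
      assert (Erm : rho (cf_q alpha (2*j)) = rho (cf_q alpha (S (S (2*k))))) by (rewrite Ej; reflexivity).
      assert (EP : P (2*j) = P (S (S (2*k)))) by (rewrite Ej; reflexivity).
      rewrite <- Eqm in g3.
      assert (hq2 : 2 <= INR q) by lra.
      assert (hqm10 : 10 <= qm) by exact Hqm.
      assert (Hfin : rho q + rho (cf_q alpha (2*j)) + 2 * gamma / AA <= P (S (S (2*k))) / qm - x0).
      { rewrite <- Eqm in B1, B2. destruct (Rle_lt_dec (2 * INR q) qm) as [c|c].
        - apply (final_case1 (INR q) qm AA gamma); [lra|lra|lra|exact AA_ge|lra|exact rho_m|lra].
        - assert (h2A : 2 * INR q * qm <= AA).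
          { unfold QQ in hQ. apply Rmult_le_reg_r with (/ (2 * qm)); [apply Rinv_0_lt_compat; lra|].
            replace (2 * INR q * qm * / (2 * qm)) with (INR q) by (field; lra). exact hQ. }
          apply (final_case2 (INR q) qm AA gamma); [lra|lra|lra|lra|exact AA_ge|exact h2A|lra|exact rho_m|].
          exact g3. }
      unfold LL, R0, ell. rewrite EP. lra.
    + right. pose proof (even_mono alpha Ha01 irr j k ltac:(lia)) as hmono.
      assert (hc : (cf_q alpha (2*j) <= q)%nat).
      { pose proof (q_mono alpha Ha01 irr (2*j) (S (2*k)) ltac:(lia)) as h.
        apply le_INR in h. apply INR_le. lra. }
      assert (rho q <= rho (cf_q alpha (2*j))) by (apply rho_mono; split; [apply (q_ge1 alpha Ha01 irr)|lia]).
      unfold R0, qm. lra.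
Qed.


Definition bad (p : Z) (q : nat) (x : R) := Rabs (x - IZR p / INR q) < rho q.

Lemma qm_pos : 10 <= qm. Proof. exact Hqm. Qed.
Lemma AA_pos : 0 < AA. Proof. pose proof AA_ge. pose proof qm_pos. nra. Qed.
Lemma QQ_pos : 0 < QQ.
Proof. unfold QQ. pose proof AA_pos. pose proof qm_pos. apply Rdiv_lt_0_compat; lra. Qed.
Lemma ell_pos : 0 < ell.
Proof. unfold ell. pose proof AA_pos. apply Rdiv_lt_0_compat; lra. Qed.
Lemma R0_LL : R0 - LL = ell. Proof. unfold LL. ring. Qed.

Definition plo (q : nat) : Z := Int_part (INR q * LL).
Definition cnt (q : nat) : nat := Z.to_nat (Int_part (INR q * R0) - plo q + 2).
Definition ival (q k : nat) : R * R :=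
  (IZR (plo q + Z.of_nat k) / INR q - rho q, IZR (plo q + Z.of_nat k) / INR q + rho q).
Definition Lq (q : nat) : list (R * R) :=
  if Rle_dec (INR q) QQ then nil else map (ival q) (seq 0 (cnt q)).
Definition LK (K : nat) := flat_map Lq (seq 1 K).

Lemma q_rho_small q : (1 <= q)%nat -> INR q * rho q <= 1/2.
Proof.
  intros hq. pose proof (INR_ge1 q hq). pose proof (rho_le4 q hq). pose proof gamma_half.
  assert (INR q * (gamma / INR q ^ 4) <= gamma).
  { replace (INR q * (gamma / INR q ^ 4)) with (gamma / INR q ^ 3) by (field; lra).
    apply Rmult_le_reg_r with (INR q ^ 3); [apply pow_lt; lra|].
    replace (gamma / INR q ^ 3 * INR q ^ 3) with gamma by (field; lra).
    assert (1 <= INR q ^ 3) by (apply pow_R1_Rle; lra). nra. }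
  assert (INR q * rho q <= INR q * (gamma / INR q ^ 4)) by (apply Rmult_le_compat_l; lra).
  lra.
Qed.

Lemma p_range p q x : (1 <= q)%nat -> LL <= x <= R0 -> bad p q x ->
  (plo q <= p /\ p <= Int_part (INR q * R0) + 1)%Z.
Proof.
  intros hq hx hb. unfold bad in hb. pose proof (INR_ge1 q hq). pose proof (q_rho_small q hq).
  apply Rabs_def2 in hb. destruct hb as [b1 b2].
  assert (c1 : INR q * x - IZR p < 1/2).
  { replace (INR q * x - IZR p) with (INR q * (x - IZR p / INR q)) by (field; lra).
    assert (INR q * (x - IZR p / INR q) < INR q * rho q) by (apply Rmult_lt_compat_l; lra). lra. }
  assert (c2 : IZR p - INR q * x < 1/2).
  { replace (IZR p - INR q * x) with (INR q * (- (x - IZR p / INR q))) by (field; lra).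
    assert (INR q * (- (x - IZR p / INR q)) < INR q * rho q) by (apply Rmult_lt_compat_l; lra). lra. }
  assert (INR q * LL <= INR q * x) by (apply Rmult_le_compat_l; lra).
  assert (INR q * x <= INR q * R0) by (apply Rmult_le_compat_l; lra).
  unfold plo. destruct (base_Int_part (INR q * LL)) as [a1 a2]. destruct (base_Int_part (INR q * R0)) as [d1 d2].
  split.
  - assert (IZR (Int_part (INR q * LL)) < IZR p + 1) by lra.
    rewrite <- plus_IZR in H3. apply lt_IZR in H3. lia.
  - assert (IZR p < IZR (Int_part (INR q * R0)) + 2) by lra.
    rewrite <- (plus_IZR _ 2) in H3. apply lt_IZR in H3. lia.
Qed.

Lemma cnt_bound q : (1 <= q)%nat -> 0 <= INR (cnt q) <= INR q * ell + 3.
Proof.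
  intros hq. pose proof (INR_ge1 q hq). pose proof ell_pos. pose proof R0_LL.
  split; [apply pos_INR|]. unfold cnt, plo.
  destruct (base_Int_part (INR q * LL)) as [a1 a2]. destruct (base_Int_part (INR q * R0)) as [d1 d2].
  assert (INR q * LL <= INR q * R0) by (apply Rmult_le_compat_l; lra).
  assert (Hz : (0 <= Int_part (INR q * R0) - Int_part (INR q * LL) + 2)%Z).
  { assert (IZR (Int_part (INR q * LL)) < IZR (Int_part (INR q * R0)) + 1) by lra.
    rewrite <- plus_IZR in H3. apply lt_IZR in H3. lia. }
  rewrite INR_IZR_INZ, Z2Nat.id by exact Hz.
  rewrite plus_IZR, minus_IZR.
  replace (INR q * ell) with (INR q * R0 - INR q * LL) by (rewrite <- H1; ring). lra.
Qed.

Lemma lenl_map_ival q n : lenl (map (ival q) (seq 0 n)) = INR n * (rho q + rho q).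
Proof.
  generalize 0%nat. induction n as [|n IH]; intros s; [simpl; ring|].
  rewrite S_INR. change (seq s (S n)) with (s :: seq (S s) n). simpl map.
  change (lenl (ival q s :: map (ival q) (seq (S s) n))) with (snd (ival q s) - fst (ival q s) + lenl (map (ival q) (seq (S s) n))).
  rewrite IH. unfold ival; simpl. ring.
Qed.

Lemma lenl_flat_map (f : nat -> list (R*R)) l :
  lenl (flat_map f l) = fold_right (fun q s => lenl (f q) + s) 0 l.
Proof. induction l as [|a l IH]; simpl; [reflexivity|rewrite lenl_app, IH; reflexivity]. Qed.

Lemma LK_bound K : lenl (LK K) <= 2 * (2 * gamma * (ell / QQ + 3 / QQ^2)) / QQ.
Proof.
  pose proof QQ_pos. pose proof ell_pos.
  unfold LK. rewrite lenl_flat_map.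
  assert (HB : 0 <= 2 * gamma * (ell / QQ + 3 / QQ^2)).
  { apply Rmult_le_pos; [lra|]. assert (0 < ell/QQ) by (apply Rdiv_lt_0_compat; lra).
    assert (0 < 3/QQ^2) by (apply Rdiv_lt_0_compat; [lra|apply pow_lt; lra]). lra. }
  eapply Rle_trans; [apply (sum_tail QQ (fun q => lenl (Lq q)) _ H HB)|].
  - intros q hq. unfold Lq. destruct (Rle_dec (INR q) QQ) as [h|h]; [simpl; lra|].
    rewrite lenl_map_ival. pose proof (INR_ge1 q hq).
    apply per_q_bound; try lra.
    + split; [left; apply rho_pos|apply rho_le4; exact hq].
    + apply cnt_bound; exact hq.
  - assert (0 < Rmax (INR K + 1) QQ) by (apply Rlt_le_trans with QQ; [lra|apply Rmax_r]).
    assert (0 <= 2 / Rmax (INR K + 1) QQ) by (left; apply Rdiv_lt_0_compat; lra).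
    assert (e : 2 * (2 * gamma * (ell / QQ + 3 / QQ ^ 2)) / QQ = 2 * gamma * (ell / QQ + 3 / QQ ^ 2) * (2 / QQ)) by (field; lra).
    rewrite e. apply Rmult_le_compat_l; [exact HB|lra].
Qed.

Lemma measure_ok K : exists x, LL <= x <= R0 /\
  forall q, (q <= K)%nat -> ~ ((1 <= q)%nat /\ exists p, bad p q x).
Proof.
  apply NNPP. intros Hn.
  assert (Hc : forall x, LL <= x <= R0 -> exists I, In I (LK K) /\ fst I < x < snd I).
  { intros x hx.
    assert (exists q, (q <= K)%nat /\ (1 <= q)%nat /\ exists p, bad p q x) as [q [hqK [hq [p hb]]]].
    { apply NNPP. intros H1. apply Hn. exists x. split; [exact hx|]. intros q hqK [hq hb].
      apply H1. exists q. auto. }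
    destruct (Rle_dec (INR q) QQ) as [hQ|hQ].
    { exfalso. destruct (small p q hq hQ) as [h|h]; unfold bad in hb; apply Rabs_def2 in hb; lra. }
    destruct (p_range p q x hq hx hb) as [r1 r2].
    exists (ival q (Z.to_nat (p - plo q))). split.
    - unfold LK. apply in_flat_map. exists q. split; [apply in_seq; lia|].
      unfold Lq. destruct (Rle_dec (INR q) QQ) as [h|h]; [contradiction|].
      apply in_map. apply in_seq. unfold cnt. lia.
    - unfold ival. simpl. rewrite Z2Nat.id by lia. replace (plo q + (p - plo q))%Z with p by lia.
      unfold bad in hb. apply Rabs_def2 in hb. lra. }
  pose proof (cover_len (LK K) LL R0 ltac:(pose proof ell_pos; pose proof R0_LL; lra) Hc) as H.
  assert (Hnn : forall I, In I (LK K) -> fst I <= snd I).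
  { intros I HI. unfold LK in HI. apply in_flat_map in HI. destruct HI as [q [_ HI]].
    unfold Lq in HI. destruct (Rle_dec (INR q) QQ); [destruct HI|].
    apply in_map_iff in HI. destruct HI as [k [<- _]]. unfold ival; simpl. pose proof (rho_pos q). lra. }
  specialize (H Hnn). pose proof (LK_bound K). rewrite R0_LL in H.
  pose proof (total_bound qm AA gamma qm_pos AA_ge AA_ge5 ltac:(pose proof gamma_half; lra)).
  unfold ell, QQ in *. lra.
Qed.


Lemma not_bad_dist p q y : (1 <= q)%nat -> ~ bad p q y ->
  gamma / Rpower (INR q) tau <= Rabs (INR q * y - IZR p).
Proof.
  intros hq hb. unfold bad in hb. apply Rnot_lt_le in hb. pose proof (INR_ge1 q hq).
  unfold rho in hb. rewrite Rpower_plus1 in hb by lra.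
  pose proof (Rpower_pos (INR q) tau).
  replace (INR q * y - IZR p) with (INR q * (y - IZR p / INR q)) by (field; lra).
  rewrite Rabs_mult, (Rabs_right (INR q)) by lra.
  replace (gamma / Rpower (INR q) tau) with (INR q * (gamma / (INR q * Rpower (INR q) tau))) by (field; lra).
  apply Rmult_le_compat_l; lra.
Qed.

Lemma exists_y : exists y, D gamma tau y /\ y <> alpha /\ Rabs (y - alpha) < 3 / qm.
Proof.
  destruct (bw_point LL R0 (fun q x => (1 <= q)%nat /\ exists p, bad p q x)) as [y [hy Hy]].
  - pose proof ell_pos. pose proof R0_LL. lra.
  - intros q x [hq [p hb]]. unfold bad in hb.
    exists (rho q - Rabs (x - IZR p / INR q)). split; [lra|].
    intros z hz. split; [exact hq|]. exists p. unfold bad.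
    replace (z - IZR p / INR q) with ((z - x) + (x - IZR p / INR q)) by ring.
    pose proof (Rabs_triang (z - x) (x - IZR p / INR q)). lra.
  - intros K. destruct (measure_ok K) as [x [hx Hx]]. exists x. split; [exact hx|]. exact Hx.
  - pose proof R0_lt. pose proof LL_gt. pose proof alpha01.
    exists y. split; [|split].
    + split; [lra|]. intros q hq.
      assert (nb : forall p, ~ bad p q y) by (intros p hb; apply (Hy q); split; [exact hq|exists p; exact hb]).
      unfold dist_Z. destruct (base_Int_part (INR q * y)) as [b1 b2].
      apply Rle_ge. apply Rmin_glb.
      * pose proof (not_bad_dist _ q y hq (nb (Int_part (INR q * y)))) as h.
        rewrite Rabs_right in h by lra. exact h.
      * pose proof (not_bad_dist _ q y hq (nb (Int_part (INR q * y) + 1)%Z)) as h.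
        rewrite plus_IZR in h. rewrite Rabs_left1 in h by lra. lra.
    + lra.
    + rewrite Rabs_left1 by lra.
      pose proof (err_even alpha Ha01 irr j) as [e1 e2]. fold qm in e1, e2.
      pose proof qm_pos. pose proof AA_ge. pose proof AA_pos. pose proof gamma_half.
      assert (hr : rho (cf_q alpha (2*j)) <= 1 / qm^2).
      { rewrite rho_m. apply frac_le; [apply Rmult_lt_0_compat; nra|nra|].
        assert (gamma * qm^2 <= AA * qm^2) by (apply Rmult_le_compat_r; nra). lra. }
      assert (he : ell <= 1 / qm^2).
      { unfold ell. apply frac_le; [lra|nra|]. assert (2 * gamma * qm^2 <= qm^2) by nra. lra. }
      assert (h3q : 3 / qm^2 <= 3 / qm) by (apply frac_le; [nra|lra|nra]).
      unfold LL, R0 in hy. fold qm in hy.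
      assert (1 / qm^2 + 1/qm^2 + 1/qm^2 = 3/qm^2) by (field; lra).
      lra.
Qed.

End Main.


Theorem lemma9 (tau gamma alpha : R) :
  (3 + sqrt 17) / 2 < tau ->
  0 < gamma ->
  D gamma tau alpha ->
  (forall n : nat, Nat.Even n ->
     alpha - INR (cf_p alpha n) / INR (cf_q alpha n)
       > gamma / Rpower (INR (cf_q alpha n)) (tau + 1)) ->
  (forall N : nat, exists m : nat, (N <= m)%nat /\ Nat.Even m /\
     forall n : nat, Nat.Even n -> (n < m)%nat ->
       INR (cf_p alpha n) / INR (cf_q alpha n)
         + gamma / Rpower (INR (cf_q alpha n)) (tau + 1)
       < INR (cf_p alpha m) / INR (cf_q alpha m)
         - gamma / Rpower (INR (cf_q alpha m)) (tau + 1)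
         - 2 * gamma / Rpower (INR (cf_q alpha m)) (tau - 1)) ->
  accumulation_point (D gamma tau) alpha.
Proof.
  intros Ht Hg HD _ H5 eps heps.
  destruct (INR_unbounded (3 / eps)) as [N0 hN0].
  destruct (H5 (N0 + 12)%nat) as [m [hNm [[j hj] Hmm]]]. subst m.
  pose proof (alpha01 tau gamma alpha HD) as Ha.
  pose proof (irr tau gamma alpha Hg HD) as Hi.
  assert (Hq : (2 * j <= cf_q alpha (2*j))%nat) by apply (q_ge_n alpha Ha Hi).
  assert (Hqr : INR N0 + 12 <= INR (cf_q alpha (2*j))).
  { assert (h : INR (N0 + 12) <= INR (cf_q alpha (2*j))) by (apply le_INR; lia).
    rewrite plus_INR in h. assert (INR 12 = 12) by (simpl; lra). lra. }
  pose proof (pos_INR N0).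
  destruct (exists_y tau gamma alpha Ht Hg HD j ltac:(lia) ltac:(lra) Hmm) as [y [hy1 [hy2 hy3]]].
  exists y. split; [exact hy1|]. split; [exact hy2|].
  unfold qm in hy3.
  assert (3 / INR (cf_q alpha (2*j)) < eps).
  { assert (0 < 3 / eps) by (apply Rdiv_lt_0_compat; lra).
    apply Rmult_lt_reg_r with (INR (cf_q alpha (2*j)) / eps).
    - apply Rdiv_lt_0_compat; lra.
    - replace (3 / INR (cf_q alpha (2 * j)) * (INR (cf_q alpha (2 * j)) / eps)) with (3 / eps) by (field; lra).
      replace (eps * (INR (cf_q alpha (2 * j)) / eps)) with (INR (cf_q alpha (2 * j))) by (field; lra).
      lra. }
  lra.
Qed.
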